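(* Every two-player continuous time single controller additive reward (SC-AR) stochastic game possesses a stationary deterministic Blackwell-Nash equilibrium; that is, there exist stationary deterministic strategies $f^*,g^*$ and $\alpha_0>0$ such that $(f^*,g^* )$ is an $\alpha$-discounted Nash equilibrium for every $\alpha\in(0,\alpha_0]$.
   Context: A two-player continuous time stochastic game consists of a finite state set $S$, finite nonempty action sets $A^1(s),A^2(s)$, reward rates $r^i(s,a^1,a^2)$ ($i=1,2$), and transition rates $\mu(s',s,a^1,a^2)\ge0$ from $s$ to $s'\ne s$, with $\mu(s,s,a^1,a^2)=-\sum_{s'\ne s}\mu(s',s,a^1,a^2)$. Stationary strategies $f,g$ assign to each state a probability distribution on $A^1(s)$, resp. $A^2(s)$; they are deterministic if each such distribution is concentrated on one action. For a stationary pair, $r^i(s,f,g)=\sum_{a^1,a^2}f(s,a^1)g(s,a^2)r^i(s,a^1,a^2)$ and $Q(f,g)$ is the generator matrix with $Q(f,g)_{ss'}=\sum_{a^1,a^2}f(s,a^1)g(s,a^2)\mu(s',s,a^1,a^2)$. For $\alpha>0$ the $\alpha$-discounted payoff is $v^i_\alpha(f,g)=(\alpha I-Q(f,g))^{-1}r^i(f,g)$ (equivalently $E^s_{f,g}\int_0^\infty e^{-\alpha t}r^i(s_t,f,g)dt$). A stationary pair $(f^*,g^* )$ is an $\alpha$-discounted Nash equilibrium if for all $s$, $v^1_\alpha(s,f^*,g^* )\ge v^1_\alpha(s,f,g^* )$ for all stationary $f$ and $v^2_\alpha(s,f^*,g^* )\ge v^2_\alpha(s,f^*,g)$ for all stationary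 $g$. The game is SC-AR if (a) $\mu(s',s,a^1,a^2)=\mu(s',s,a^2)$ does not depend on $a^1$, and (b) $r^1(s,a^1,a^2)=r^1_1(s,a^1)+r^1_2(s,a^2)$ for some functions $r^1_1,r^1_2$, for all $s,a^1,a^2$. *)

(* Defs.v *)
From HB Require Import structures.
From mathcomp Require Import all_boot all_order all_algebra.
Set Implicit Arguments. Unset Strict Implicit. Unset Printing Implicit Defensive.
Import Order.TTheory GRing.Theory Num.Theory.
Local Open Scope ring_scope.

Section Game.
Variables (R : rcfType) (n : nat) (A1 A2 : finType).

Definition stationary (A : finType) (Av : 'I_n -> {set A})
    (f : 'I_n -> A -> R) : Prop :=
  forall s, (forall a, 0 <= f s a) /\ (forall a, a \notin Av s -> f s a = 0)
            /\ \sum_(a in Av s) f s a = 1.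

Definition deterministic (A : finType) (Av : 'I_n -> {set A})
    (f : 'I_n -> A -> R) : Prop :=
  forall s, exists2 a, a \in Av s & forall b, f s b = (b == a)%:R.

(* mu s' s a1 a2 : transition rate from s to s' (only used for s' != s);
   the diagonal entry is minus the total off-diagonal rate. *)
Definition gen_rate (mu : 'I_n -> 'I_n -> A1 -> A2 -> R)
    (s' s : 'I_n) (a1 : A1) (a2 : A2) : R :=
  if s' == s then - \sum_(t | t != s) mu t s a1 a2 else mu s' s a1 a2.

Definition rew (r : 'I_n -> A1 -> A2 -> R)
    (f : 'I_n -> A1 -> R) (g : 'I_n -> A2 -> R) : 'cV[R]_n :=
  \col_s \sum_a1 \sum_a2 f s a1 * g s a2 * r s a1 a2.

Definition genQ (mu : 'I_n -> 'I_n -> A1 -> A2 -> R)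
    (f : 'I_n -> A1 -> R) (g : 'I_n -> A2 -> R) : 'M[R]_n :=
  \matrix_(s, s') \sum_a1 \sum_a2 f s a1 * g s a2 * gen_rate mu s' s a1 a2.

Definition disc_payoff (mu : 'I_n -> 'I_n -> A1 -> A2 -> R)
    (r : 'I_n -> A1 -> A2 -> R) (alpha : R)
    (f : 'I_n -> A1 -> R) (g : 'I_n -> A2 -> R) : 'cV[R]_n :=
  invmx (alpha%:M - genQ mu f g) *m rew r f g.

Definition disc_nash (Av1 : 'I_n -> {set A1}) (Av2 : 'I_n -> {set A2})
    (mu : 'I_n -> 'I_n -> A1 -> A2 -> R)
    (r1 r2 : 'I_n -> A1 -> A2 -> R) (alpha : R)
    (fs : 'I_n -> A1 -> R) (gs : 'I_n -> A2 -> R) : Prop :=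
  (forall f, stationary Av1 f -> forall s,
      disc_payoff mu r1 alpha f gs s 0 <= disc_payoff mu r1 alpha fs gs s 0) /\
  (forall g, stationary Av2 g -> forall s,
      disc_payoff mu r2 alpha fs g s 0 <= disc_payoff mu r2 alpha fs gs s 0).

End Game.

(* Main.v *)
Require Import Defs.
From HB Require Import structures.
From mathcomp Require Import all_boot all_order all_algebra.
From mathcomp Require Import ring lra.
Set Implicit Arguments. Unset Strict Implicit. Unset Printing Implicit Defensive.
Import Order.TTheory GRing.Theory Num.Theory.
Local Open Scope ring_scope.


Definition genm (R : rcfType) n (Q : 'M[R]_n) : Prop :=
  (forall s t, s != t -> 0 <= Q s t) /\ (forall s, \sum_t Q s t = 0).

Lemma genE (R : rcfType) n (Q : 'M[R]_n) (a : R) (x : 'cV_n) s :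
  \sum_t Q s t = 0 ->
  ((a%:M - Q) *m x) s 0 = a * x s 0 - \sum_j Q s j * (x j 0 - x s 0).
Proof.
move=> h; rewrite mulmxBl mul_scalar_mx !mxE; congr (_ - _).
rewrite [RHS](eq_bigr (fun j => Q s j * x j 0 - Q s j * x s 0)); last first.
  by move=> j _; rewrite mulrBr.
by rewrite sumrB -mulr_suml h mul0r subr0.
Qed.

Lemma gen_pos (R : rcfType) n (Q : 'M[R]_n) (a : R) (x : 'cV_n) :
  0 < a -> genm Q -> (forall s, 0 <= ((a%:M - Q) *m x) s 0) -> forall s, 0 <= x s 0.
Proof.
move=> ha [h1 h2] hx s0; rewrite leNgt; apply/negP => hs0.
case: (@arg_minP _ R _ s0 xpredT (fun i => x i 0)) => // m _ hm.
have := hx m; rewrite genE //.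
have hsum : 0 <= \sum_j Q m j * (x j 0 - x m 0).
  apply: sumr_ge0 => j _; case: (eqVneq m j) => [->|hmj].
    by rewrite subrr mulr0.
  by apply: mulr_ge0; [exact: h1 | rewrite subr_ge0; exact: hm].
have : x m 0 < 0 by apply: le_lt_trans (hm s0 isT) hs0.
move=> hneg; have : a * x m 0 < 0 by rewrite pmulr_rlt0.
lra.
Qed.

Lemma gen_strict (R : rcfType) n (Q : 'M[R]_n) (a : R) (x : 'cV_n) s :
  0 < a -> genm Q -> (forall s, 0 <= ((a%:M - Q) *m x) s 0) ->
  0 < ((a%:M - Q) *m x) s 0 -> 0 < x s 0.
Proof.
move=> ha hg hx hs; have hpos := gen_pos ha hg hx.
rewrite lt_neqAle hpos andbT; apply/negP => /eqP hx0.
move: hs; case: hg => h1 h2; rewrite genE // -hx0 mulr0 sub0r oppr_gt0.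
apply/negP; rewrite -leNgt; apply: sumr_ge0 => j _.
case: (eqVneq s j) => [<-|hsj]; first by rewrite -hx0 subr0 mulr0.
by rewrite subr0; apply: mulr_ge0; [exact: h1 | exact: hpos].
Qed.

Lemma gen_unit (R : rcfType) n (Q : 'M[R]_n) (a : R) :
  0 < a -> genm Q -> (a%:M - Q) \in unitmx.
Proof.
move=> ha hg; rewrite -unitmx_tr -row_free_unit; apply: inj_row_free => v hv.
have hx : (a%:M - Q) *m v^T = 0 by rewrite -[_ *m _]trmxK trmx_mul trmxK hv trmx0.
have p1 := gen_pos ha hg (x := v^T).
have p2 := gen_pos ha hg (x := - v^T).
apply/matrixP => i j; rewrite ord1 mxE.
rewrite mulmxN hx in p2; rewrite hx in p1.
have h1 : 0 <= v^T j 0 by apply: p1 => s; rewrite !mxE.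
have h2 : 0 <= (- v^T) j 0 by apply: p2 => s; rewrite !mxE oppr0.
move: h1 h2; rewrite !mxE => h1 h2.
lra.
Qed.

Lemma gen_mono (R : rcfType) n (Q : 'M[R]_n) (a : R) (y z : 'cV_n) :
  0 < a -> genm Q -> (forall s, y s 0 <= z s 0) ->
  forall s, (invmx (a%:M - Q) *m y) s 0 <= (invmx (a%:M - Q) *m z) s 0.
Proof.
move=> ha hg hyz s.
have hu := gen_unit ha hg.
have := gen_pos ha hg (x := invmx (a%:M - Q) *m (z - y)).
rewrite mulmxA mulmxV // mul1mx => /(_ _ s).
rewrite mulmxBr !mxE subr_ge0; apply => t; rewrite !mxE subr_ge0; exact: hyz.
Qed.


Definition Qm (R : rcfType) n (A : finType) (q : 'I_n -> A -> 'I_n -> R)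
  (g : 'I_n -> A -> R) : 'M[R]_n := \matrix_(s, t) \sum_a g s a * q s a t.
Definition cvec (R : rcfType) n (A : finType) (c : 'I_n -> A -> R)
  (g : 'I_n -> A -> R) : 'cV[R]_n := \col_s \sum_a g s a * c s a.
Definition Val (R : rcfType) n (A : finType) (al : R) (q : 'I_n -> A -> 'I_n -> R)
  (c : 'I_n -> A -> R) (g : 'I_n -> A -> R) : 'cV[R]_n :=
  invmx (al%:M - Qm q g) *m cvec c g.
Definition detS (R : rcfType) n (A : finType) (d : 'I_n -> A) : 'I_n -> A -> R :=
  fun s a => (a == d s)%:R.
Arguments detS {R n A} d s a.
Definition Bell (R : rcfType) n (A : finType) (al : R) (Av : 'I_n -> {set A})
  (q : 'I_n -> A -> 'I_n -> R) (c : 'I_n -> A -> R) (v : 'cV[R]_n) : Prop :=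
  forall s x, x \in Av s -> c s x + \sum_t q s x t * v t 0 <= al * v s 0.

Lemma sum_delta (R : rcfType) (T : finType) (x : T) (F : T -> R) :
  \sum_a (a == x)%:R * F a = F x.
Proof.
rewrite (bigD1 x) //= eqxx mul1r big1 ?addr0 // => a /negbTE ->; by rewrite mul0r.
Qed.

Lemma stat_sum1 (R : rcfType) n (A : finType) (Av : 'I_n -> {set A}) g s :
  stationary (R:=R) Av g -> \sum_a g s a = 1.
Proof.
move=> /(_ s) [h0 [hout h1]].
rewrite (bigID (mem (Av s))) /= h1 big1 ?addr0 // => a ha; exact: hout.
Qed.

Lemma stat_le (R : rcfType) n (A : finType) (Av : 'I_n -> {set A}) g s (F G : A -> R) :
  stationary (R:=R) Av g -> (forall a, a \in Av s -> F a <= G a) ->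
  \sum_a g s a * F a <= \sum_a g s a * G a.
Proof.
move=> hg hFG; apply: ler_sum => a _; case: (hg s) => h0 [hout _].
case: (boolP (a \in Av s)) => ha.
  by apply: ler_wpM2l; [exact: h0 | exact: hFG].
by rewrite hout // !mul0r.
Qed.

Lemma stat_eq (R : rcfType) n (A : finType) (Av : 'I_n -> {set A}) g s (F G : A -> R) :
  stationary (R:=R) Av g -> (forall a, a \in Av s -> F a = G a) ->
  \sum_a g s a * F a = \sum_a g s a * G a.
Proof.
move=> hg hFG; apply/eqP; rewrite eq_le; apply/andP; split; apply: (stat_le hg) => a ha; rewrite hFG //.
Qed.

Lemma stat_const (R : rcfType) n (A : finType) (Av : 'I_n -> {set A}) g s (K : R) :
  stationary (R:=R) Av g -> \sum_a g s a * K = K.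
Proof. by move=> hg; rewrite -mulr_suml (stat_sum1 s hg) mul1r. Qed.

Lemma detS_stat (R : rcfType) n (A : finType) (Av : 'I_n -> {set A}) (d : 'I_n -> A) :
  (forall s, d s \in Av s) -> stationary (R:=R) Av (detS d).
Proof.
move=> hd s; split; first by move=> a; rewrite /detS ler0n.
split; first by move=> a ha; rewrite /detS; case: eqP => // e; move: ha; rewrite e hd.
rewrite (bigD1 (d s)) //= /detS eqxx big1 ?addr0 // => a /andP[_ /negbTE ->] //.
Qed.

Lemma Qm_gen (R : rcfType) n (A : finType) (Av : 'I_n -> {set A})
  (q : 'I_n -> A -> 'I_n -> R) g :
  (forall s a t, a \in Av s -> s != t -> 0 <= q s a t) ->
  (forall s a, a \in Av s -> \sum_t q s a t = 0) ->
  stationary Av g -> genm (Qm q g).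
Proof.
move=> h1 h2 hg; split.
  move=> s t hst; rewrite mxE; apply: sumr_ge0 => a _.
  case: (hg s) => h0 [hout _]; case: (boolP (a \in Av s)) => ha.
    by apply: mulr_ge0; [exact: h0 | exact: h1].
  by rewrite hout // mul0r.
move=> s; rewrite (eq_bigr (fun t => \sum_a g s a * q s a t)); last by move=> t _; rewrite mxE.
rewrite exchange_big /= big1 // => a _; rewrite -mulr_sumr.
case: (hg s) => h0 [hout _]; case: (boolP (a \in Av s)) => ha.
  by rewrite h2 // mulr0.
by rewrite hout // mul0r.
Qed.

Lemma Qm_det (R : rcfType) n (A : finType) (q : 'I_n -> A -> 'I_n -> R) (d : 'I_n -> A) s t :
  Qm q (detS d) s t = q s (d s) t.
Proof. by rewrite mxE /detS sum_delta. Qed.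

Lemma cvec_det (R : rcfType) n (A : finType) (c : 'I_n -> A -> R) (d : 'I_n -> A) s :
  cvec c (detS d) s 0 = c s (d s).
Proof. by rewrite mxE /detS sum_delta. Qed.

Lemma bellman_opt (R : rcfType) n (A : finType) (Av : 'I_n -> {set A})
  (q : 'I_n -> A -> 'I_n -> R) (c : 'I_n -> A -> R) (al : R) (v : 'cV[R]_n) g :
  (forall s a t, a \in Av s -> s != t -> 0 <= q s a t) ->
  (forall s a, a \in Av s -> \sum_t q s a t = 0) ->
  0 < al -> Bell al Av q c v -> stationary Av g ->
  forall s, Val al q c g s 0 <= v s 0.
Proof.
move=> h1 h2 hal hb hg s.
have hG := Qm_gen h1 h2 hg.
have hu := gen_unit hal hG.
have -> : v = invmx (al%:M - Qm q g) *m ((al%:M - Qm q g) *m v).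
  by rewrite mulmxA mulVmx // mul1mx.
apply: gen_mono => // t.
rewrite mulmxBl mul_scalar_mx !mxE.
rewrite (eq_bigr (fun j => \sum_a g t a * (q t a j * v j 0))); last first.
  by move=> j _; rewrite mxE mulr_suml; apply: eq_bigr => a _; rewrite mulrA.
rewrite exchange_big /=.
rewrite -(stat_const t (al * v t 0) hg) -sumrB.
rewrite -subr_ge0 -sumrB; apply: sumr_ge0 => a _.
rewrite -mulr_sumr -!mulrBr.
case: (hg t) => h0 [hout _]; case: (boolP (a \in Av t)) => ha.
  apply: mulr_ge0; first exact: h0.
  have := hb t a ha; lra.
by rewrite hout // mul0r.
Qed.

Lemma Mdet_entry (R : rcfType) n (A : finType) (q : 'I_n -> A -> 'I_n -> R) (d : 'I_n -> A)
  (al : R) (x : 'cV[R]_n) s :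
  ((al%:M - Qm q (detS d)) *m x) s 0 = al * x s 0 - \sum_t q s (d s) t * x t 0.
Proof.
rewrite mulmxBl mul_scalar_mx !mxE; congr (_ - _); apply: eq_bigr => t _.
by rewrite Qm_det.
Qed.

Lemma improve (R : rcfType) n (A : finType) (Av : 'I_n -> {set A})
  (q : 'I_n -> A -> 'I_n -> R) (c : 'I_n -> A -> R) (al : R) (d : 'I_n -> A) s0 a0 :
  (forall s a t, a \in Av s -> s != t -> 0 <= q s a t) ->
  (forall s a, a \in Av s -> \sum_t q s a t = 0) ->
  0 < al -> (forall s, d s \in Av s) -> a0 \in Av s0 ->
  al * Val al q c (detS d) s0 0 <
     c s0 a0 + \sum_t q s0 a0 t * Val al q c (detS d) t 0 ->
  (forall s, Val al q c (detS d) s 0 <=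
             Val al q c (detS (fun s => if s == s0 then a0 else d s)) s 0) /\
  Val al q c (detS d) s0 0 <
             Val al q c (detS (fun s => if s == s0 then a0 else d s)) s0 0.
Proof.
move=> h1 h2 hal hd ha0 hlt.
set d' := fun s => if s == s0 then a0 else d s.
have hd' : forall s, d' s \in Av s by move=> s; rewrite /d'; case: eqP => [->|].
have hG := Qm_gen h1 h2 (detS_stat R hd).
have hG' := Qm_gen h1 h2 (detS_stat R hd').
have hu := gen_unit hal hG; have hu' := gen_unit hal hG'.
set v := Val al q c (detS d); set v' := Val al q c (detS d').
have hMv : (al%:M - Qm q (detS d)) *m v = cvec c (detS d).
  by rewrite /v /Val mulmxA mulmxV // mul1mx.
set w := v' - v.
have hw : (al%:M - Qm q (detS d')) *m w = cvec c (detS d') - (al%:M - Qm q (detS d')) *m v.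
  by rewrite /w /v' /Val mulmxBr mulmxA mulmxV // mul1mx.
have hent : forall s, ((al%:M - Qm q (detS d')) *m w) s 0 =
   c s (d' s) - (al * v s 0 - \sum_t q s (d' s) t * v t 0).
  move=> s; rewrite hw -(Mdet_entry q d' al v s) -(cvec_det c d' s).
  by rewrite [LHS]mxE [X in _ + X]mxE.
have hnn : forall s, 0 <= ((al%:M - Qm q (detS d')) *m w) s 0.
  move=> s; rewrite hent; case: (eqVneq s s0) => [->|hs].
    rewrite /d' eqxx; lra.
  have : d' s = d s by rewrite /d' (negbTE hs).
  move=> ->; have := Mdet_entry q d al v s; rewrite hMv cvec_det => <-.
  by rewrite subrr.
have hpos := gen_pos hal hG' hnn.
have hstr : 0 < w s0 0.
  apply: (gen_strict hal hG' hnn); rewrite hent /d' eqxx; lra.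
split.
  by move=> s; have := hpos s; rewrite /w !mxE subr_ge0.
by move: hstr; rewrite /w !mxE subr_gt0.
Qed.

Lemma Val_ext (R : rcfType) n (A : finType) (q : 'I_n -> A -> 'I_n -> R) (c : 'I_n -> A -> R)
  (al : R) (d1 d2 : 'I_n -> A) :
  (forall s, d1 s = d2 s) -> Val al q c (detS d1) = Val al q c (detS d2).
Proof.
move=> e; rewrite /Val.
have -> : Qm q (detS d1) = Qm q (detS d2) by apply/matrixP => i j; rewrite !Qm_det e.
have -> // : cvec c (detS d1) = cvec c (detS d2).
by apply/matrixP => i j; rewrite ord1 !cvec_det e.
Qed.

Lemma exists_bell (R : rcfType) n (A : finType) (Av : 'I_n -> {set A})
  (q : 'I_n -> A -> 'I_n -> R) (c : 'I_n -> A -> R) (al : R) :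
  (forall s a t, a \in Av s -> s != t -> 0 <= q s a t) ->
  (forall s a, a \in Av s -> \sum_t q s a t = 0) ->
  (forall s, exists a, a \in Av s) -> 0 < al ->
  exists2 d : 'I_n -> A, (forall s, d s \in Av s) & Bell al Av q c (Val al q c (detS d)).
Proof.
move=> h1 h2 hAv hal.
pose d0 : {ffun 'I_n -> A} := [ffun s => xchoose (hAv s)].
pose P := fun d : {ffun 'I_n -> A} => [forall s, d s \in Av s].
have P0 : P d0 by apply/forallP => s; rewrite ffunE; exact: xchooseP.
pose F := fun d : {ffun 'I_n -> A} => \sum_s Val al q c (detS (fun s => d s)) s 0.
case: (@arg_maxP _ R _ d0 P F P0) => d Pd hmax.
have hd : forall s, d s \in Av s by move=> s; exact: (forallP Pd s).
exists (fun s => d s) => // s0 a0 ha0; rewrite leNgt; apply/negP => hlt.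
have [hle hst] := improve h1 h2 hal hd ha0 hlt.
pose d' : {ffun 'I_n -> A} := [ffun s => if s == s0 then a0 else d s].
have Pd' : P d'.
  apply/forallP => s; rewrite ffunE; case: eqP => [->|_] //.
have := hmax d' Pd'; rewrite /F.
rewrite (Val_ext q c al (d1 := fun s => d' s) (d2 := fun s => if s == s0 then a0 else d s)); last first.
  by move=> s; rewrite ffunE.
apply/negP; rewrite -ltNge.
rewrite [X in X < _](bigD1 s0) // [X in _ < X](bigD1 s0) //=.
apply: ltr_leD => //; apply: ler_sum => s _; exact: hle.
Qed.


Lemma poly_bound (R : rcfType) (p : {poly R}) (x : R) :
  0 <= x -> x <= 1 -> `|p.[x]| <= \sum_(i < size p) `|p`_i|.
Proof.
move=> h0 h1; rewrite horner_coef; apply: le_trans (ler_norm_sum _ _ _) _.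
apply: ler_sum => i _; rewrite normrM normrX.
rewrite -[X in _ <= X]mulr1; apply: ler_wpM2l => //.
apply: exprn_ile1 => //; by rewrite ger0_norm.
Qed.

Lemma poly_evsign (R : rcfType) (p : {poly R}) :
  exists2 e : R, 0 < e &
   (forall x, 0 < x -> x <= e -> 0 <= p.[x]) \/ (forall x, 0 < x -> x <= e -> p.[x] < 0).
Proof.
elim/poly_ind: p => [|p c [e he IH]].
  by exists 1 => //; left => x _ _; rewrite horner0.
case: (eqVneq c 0) => [->|hc].
  exists e => //; case: IH => IH; [left|right] => x hx hxe;
  rewrite hornerMXaddC addr0.
    by apply: mulr_ge0; [exact: IH | exact: ltW].
  by rewrite pmulr_llt0 //; exact: IH.
set B := \sum_(i < size p) `|p`_i|.
have hB : 0 <= B by apply: sumr_ge0.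
have hc0 : 0 < `|c| by rewrite normr_gt0.
set D := B + `|c| + 1.
have hD : 0 < D by rewrite /D; lra.
set e' := `|c| / D.
have he' : 0 < e' by rewrite /e' divr_gt0.
have heD : e' * D = `|c| by rewrite /e' mulfVK // gt_eqF.
have he1 : e' <= 1 by rewrite /e' ler_pdivrMr // mul1r /D; lra.
have hBe : B * e' < `|c|.
  rewrite /e' mulrA ltr_pdivrMr // /D mulrDr mulrDr mulr1 mulrC; nra.
have key : forall x, 0 < x -> x <= e' -> `|p.[x] * x| < `|c|.
  move=> x hx hxe; rewrite normrM (gtr0_norm hx).
  have hp := poly_bound p (ltW hx) (le_trans hxe he1).
  apply: le_lt_trans hBe.
  apply: le_trans (ler_wpM2r (ltW hx) hp) _.
  by apply: ler_wpM2l.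
exists e' => //.
case: (ltrgt0P c) hc0 => [hcp|hcn|hc0']; last by move: hc; rewrite hc0' eqxx.
  move=> _; left => x hx hxe; rewrite hornerMXaddC.
  have := key x hx hxe; rewrite (gtr0_norm hcp) => /ltW; rewrite ler_norml => /andP[h _].
  lra.
move=> _; right => x hx hxe; rewrite hornerMXaddC.
have := key x hx hxe; rewrite (ltr0_norm hcn) ltr_norml => /andP[_ h].
lra.
Qed.

Lemma ratrep (R : rcfType) n (Q : 'M[R]_n) (r : 'cV[R]_n) s (al : R) :
  (al%:M - Q) \in unitmx ->
  (char_poly Q).[al] != 0 /\
  (invmx (al%:M - Q) *m r) s 0 =
    ((\adj (char_poly_mx Q) *m map_mx polyC r) s 0).[al] / (char_poly Q).[al].
Proof.
move=> hu.
have hM : map_mx (horner_eval al) (char_poly_mx Q) = al%:M - Q.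
  apply/matrixP => i j; rewrite !mxE horner_evalE hornerD hornerN hornerMn hornerX hornerC.
  by [].
have hD : (char_poly Q).[al] = \det (al%:M - Q).
  by rewrite -hM det_map_mx /= horner_evalE.
have hP : ((\adj (char_poly_mx Q) *m map_mx polyC r) s 0).[al] =
          (\adj (al%:M - Q) *m r) s 0.
  rewrite -hM -map_mx_adj !mxE horner_sum; apply: eq_bigr => j _.
  by rewrite !mxE hornerM hornerC.
have hdet : \det (al%:M - Q) != 0 by rewrite -unitfE -unitmxE.
have hadj : \adj (al%:M - Q) = \det (al%:M - Q) *: invmx (al%:M - Q).
  rewrite -[LHS]mulmx1 -(mulmxV hu) mulmxA mul_adj_mx mul_scalar_mx //.
rewrite hD hP hadj -scalemxAl; split => //.
rewrite [in RHS]mxE; apply/esym; by rewrite mulrAC mulfV // mul1r.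
Qed.

Lemma evcmp (R : rcfType) (P1 D1 P2 D2 : {poly R}) (f1 f2 : R -> R) :
  (forall al, 0 < al -> D1.[al] != 0 /\ f1 al = P1.[al] / D1.[al]) ->
  (forall al, 0 < al -> D2.[al] != 0 /\ f2 al = P2.[al] / D2.[al]) ->
  exists2 e : R, 0 < e &
    (forall al, 0 < al -> al <= e -> f2 al <= f1 al) \/
    (forall al, 0 < al -> al <= e -> f1 al < f2 al).
Proof.
move=> h1 h2.
have [e he H] := poly_evsign ((P1 * D2 - P2 * D1) * (D1 * D2)).
have key : forall al, 0 < al ->
   f1 al - f2 al = ((P1 * D2 - P2 * D1) * (D1 * D2)).[al] / (D1.[al] * D2.[al]) ^+ 2
   /\ 0 < (D1.[al] * D2.[al]) ^+ 2.
  move=> al hal; have [n1 e1] := h1 al hal; have [n2 e2] := h2 al hal.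
  split; last by rewrite exprn_even_gt0 //= mulf_neq0.
  rewrite e1 e2 !(hornerM, hornerD, hornerN); field.
  by rewrite n1 n2.
exists e => //; case: H => H; [left|right] => al hal hle.
  have [k1 k2] := key al hal; rewrite -subr_ge0 k1.
  by apply: divr_ge0; [exact: H | exact: ltW].
have [k1 k2] := key al hal; rewrite -subr_lt0 k1.
by rewrite pmulr_llt0 ?invr_gt0 //; exact: H.
Qed.


Lemma fin_eps (R : rcfType) (T : finType) (P : T -> R -> Prop) :
  (forall t e e', 0 < e' -> e' <= e -> P t e -> P t e') ->
  (forall t, exists2 e, 0 < e & P t e) -> exists2 e, 0 < e & forall t, P t e.
Proof.
move=> hdown hall.
suff H : forall s : seq T, exists2 e, 0 < e & forall t, t \in s -> P t e.
  have [e he H'] := H (enum T).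
  by exists e => // t; apply: H'; rewrite mem_enum.
elim=> [|x s [e2 he2 H2]]; first by exists 1.
have [e1 he1 H1] := hall x.
exists (Num.min e1 e2); first by rewrite lt_min he1 he2.
move=> t; rewrite inE => /orP[/eqP ->|ht].
  apply: (hdown x e1 (Num.min e1 e2)) => //; first by rewrite lt_min he1 he2.
  by rewrite ge_min lexx.
apply: (hdown t e2 (Num.min e1 e2)); first by rewrite lt_min he1 he2.
  by rewrite ge_min lexx orbT.
exact: H2.
Qed.

Lemma blackwell (R : rcfType) n (A : finType) (Av : 'I_n -> {set A})
  (q : 'I_n -> A -> 'I_n -> R) (c : 'I_n -> A -> R) :
  (forall s a t, a \in Av s -> s != t -> 0 <= q s a t) ->
  (forall s a, a \in Av s -> \sum_t q s a t = 0) ->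
  (forall s, exists a, a \in Av s) ->
  exists2 d : 'I_n -> A, (forall s, d s \in Av s) &
    exists2 e : R, 0 < e &
      forall al, 0 < al -> al <= e -> Bell al Av q c (Val al q c (detS d)).
Proof.
move=> h1 h2 hAv.
pose valid := fun d : {ffun 'I_n -> A} => [forall s, d s \in Av s].
pose P := fun (t : {ffun 'I_n -> A} * {ffun 'I_n -> A} * 'I_n) (e : R) =>
  valid t.1.1 -> valid t.1.2 ->
  (forall al, 0 < al -> al <= e ->
     Val al q c (detS (fun s => t.1.2 s)) t.2 0 <= Val al q c (detS (fun s => t.1.1 s)) t.2 0)
  \/ (forall al, 0 < al -> al <= e ->
     Val al q c (detS (fun s => t.1.1 s)) t.2 0 < Val al q c (detS (fun s => t.1.2 s)) t.2 0).
have [e0 he0 H0] : exists2 e, 0 < e & forall t, P t e.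
  apply: (@fin_eps R _ P).
    move=> t e e' he' hle HP v1 v2; case: (HP v1 v2) => H; [left|right] => al hal hal';
    apply: H => //; exact: le_trans hal' hle.
  move=> [[d1 d2] s].
  case: (boolP (valid d1 && valid d2)) => [/andP[v1 v2]|hv]; last first.
    by exists 1 => // v1 v2; move: hv; rewrite v1 v2.
  have hd1 : forall s, d1 s \in Av s by move=> s'; exact: (forallP v1 s').
  have hd2 : forall s, d2 s \in Av s by move=> s'; exact: (forallP v2 s').
  have [e he H] := evcmp
    (f1 := fun al => Val al q c (detS (fun s => d1 s)) s 0)
    (f2 := fun al => Val al q c (detS (fun s => d2 s)) s 0)
    (fun al hal => ratrep (cvec c (detS (fun s => d1 s))) s
        (gen_unit hal (Qm_gen h1 h2 (detS_stat R hd1))))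
    (fun al hal => ratrep (cvec c (detS (fun s => d2 s))) s
        (gen_unit hal (Qm_gen h1 h2 (detS_stat R hd2)))).
  by exists e => // _ _.
have [d hd hb] := exists_bell c h1 h2 hAv he0.
exists d => //; exists e0 => // al hal hle s0 a0 ha0.
rewrite leNgt; apply/negP => hlt.
have [_ hst] := improve h1 h2 hal hd ha0 hlt.
pose df : {ffun 'I_n -> A} := [ffun s => d s].
pose df' : {ffun 'I_n -> A} := [ffun s => if s == s0 then a0 else d s].
have vf : valid df by apply/forallP => s; rewrite ffunE.
have vf' : valid df' by apply/forallP => s; rewrite ffunE; case: eqP => [->|].
have e1 : forall al, Val al q c (detS (fun s => df s)) = Val al q c (detS d).
  by move=> al'; apply: Val_ext => s; rewrite ffunE.
have e2 : forall al, Val al q c (detS (fun s => df' s)) =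
                     Val al q c (detS (fun s => if s == s0 then a0 else d s)).
  by move=> al'; apply: Val_ext => s; rewrite ffunE.
case: (H0 (df, df', s0) vf vf') => /= H.
  by have := H al hal hle; rewrite e1 e2 leNgt hst.
have := H e0 he0 (lexx _); rewrite e1 e2.
apply/negP; rewrite -leNgt.
apply: (bellman_opt h1 h2 he0 hb).
apply: detS_stat => s; rewrite -(ffunE (fun s => if s == s0 then a0 else d s)).
exact: (forallP vf' s).
Qed.


Lemma collapse2 (R : rcfType) n (A1 A2 : finType) (f : 'I_n -> A1 -> R) (d : 'I_n -> A2) s
  (F : A1 -> A2 -> R) :
  \sum_a1 \sum_a2 f s a1 * detS d s a2 * F a1 a2 = \sum_a1 f s a1 * F a1 (d s).
Proof.
apply: eq_bigr => a1 _.
rewrite -(sum_delta (d s) (fun a2 => f s a1 * F a1 a2)); apply: eq_bigr => a2 _.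
by rewrite /detS [f s a1 * _]mulrC -mulrA.
Qed.

Lemma collapse1 (R : rcfType) n (A1 A2 : finType) (f0 : 'I_n -> A1) (g : 'I_n -> A2 -> R) s
  (F : A1 -> A2 -> R) :
  \sum_a1 \sum_a2 detS f0 s a1 * g s a2 * F a1 a2 = \sum_a2 g s a2 * F (f0 s) a2.
Proof.
rewrite -(sum_delta (f0 s) (fun a1 => \sum_a2 g s a2 * F a1 a2)); apply: eq_bigr => a1 _.
by rewrite mulr_sumr; apply: eq_bigr => a2 _; rewrite /detS mulrA.
Qed.

Unset Implicit Arguments.

Theorem theorem4 (R : rcfType) (n : nat) (A1 A2 : finType)
    (Av1 : 'I_n -> {set A1}) (Av2 : 'I_n -> {set A2})
    (mu : 'I_n -> 'I_n -> A1 -> A2 -> R) (r1 r2 : 'I_n -> A1 -> A2 -> R)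
    (hAv1 : forall s, exists a, a \in Av1 s)
    (hAv2 : forall s, exists a, a \in Av2 s)
    (hmu : forall s' s a1 a2, s' != s -> a1 \in Av1 s -> a2 \in Av2 s ->
             0 <= mu s' s a1 a2)
    (* SC: transition rates do not depend on player 1's action *)
    (hSC : forall s' s a1 b1 a2, a1 \in Av1 s -> b1 \in Av1 s -> a2 \in Av2 s ->
             mu s' s a1 a2 = mu s' s b1 a2)
    (* AR: player 1's reward is additive *)
    (hAR : exists (r11 : 'I_n -> A1 -> R) (r12 : 'I_n -> A2 -> R),
             forall s a1 a2, a1 \in Av1 s -> a2 \in Av2 s ->
               r1 s a1 a2 = r11 s a1 + r12 s a2) :
  exists fs gs,
    [/\ stationary Av1 fs, deterministic Av1 fs,
        stationary Av2 gs, deterministic Av2 gs &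
        exists2 alpha0 : R, 0 < alpha0 &
          forall alpha, 0 < alpha -> alpha <= alpha0 ->
            disc_nash Av1 Av2 mu r1 r2 alpha fs gs].
Proof.
case: hAR => r11 [r12 hr].
have exmax : forall s, exists a, (a \in Av1 s) && [forall b in Av1 s, r11 s b <= r11 s a].
  move=> s; have a0 := xchooseP (hAv1 s).
  case: (@arg_maxP _ R A1 (xchoose (hAv1 s)) (mem (Av1 s)) (r11 s) a0) => a ha hm.
  exists a; apply/andP; split; first exact: ha.
  apply/forallP => b; apply/implyP => hb; exact: hm.
pose f0 := fun s => xchoose (exmax s).
have hf0 : forall s, f0 s \in Av1 s by move=> s; have /andP[] := xchooseP (exmax s).
have hf0m : forall s b, b \in Av1 s -> r11 s b <= r11 s (f0 s).
  move=> s b hb; have /andP[_ /forallP H] := xchooseP (exmax s); exact: (implyP (H b) hb).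
pose q := fun s a t => gen_rate mu t s (f0 s) a.
pose c := fun s a => r2 s (f0 s) a.
have hq1 : forall s a t, a \in Av2 s -> s != t -> 0 <= q s a t.
  move=> s a t ha hst; rewrite /q /gen_rate eq_sym (negbTE hst).
  by apply: hmu => //; rewrite eq_sym.
have hq2 : forall s a, a \in Av2 s -> \sum_t q s a t = 0.
  move=> s a ha; rewrite (bigD1 s) //= {1}/q /gen_rate eqxx.
  rewrite (eq_bigr (fun t => mu t s (f0 s) a)) ?addNr // => t hts.
  by rewrite /q /gen_rate (negbTE hts).
have [d hd [e0 he0 hB]] := blackwell c hq1 hq2 hAv2.
have hfs := detS_stat R hf0.
have hgs := detS_stat R hd.
exists (detS f0), (detS d); split => //.
- by move=> s; exists (f0 s).
- by move=> s; exists (d s).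
exists e0 => // al hal hle; split.
  have hQ : forall f, stationary Av1 f -> genQ mu f (detS d) = Qm q (detS d).
    move=> f hf; apply/matrixP => i j; rewrite Qm_det !mxE collapse2 /q.
    rewrite (stat_eq (s := i) hf (G := fun _ => gen_rate mu j i (f0 i) (d i))) /=.
      exact: stat_const.
    move=> a1 ha1; rewrite /gen_rate; case: eqP => _; last exact: hSC.
    by congr (- _); apply: eq_bigr => t _; apply: hSC.
  move=> f hf s; rewrite /disc_payoff hQ // hQ //.
  apply: gen_mono => //; first exact: (Qm_gen hq1 hq2 hgs).
  move=> t; rewrite !mxE collapse2 collapse1 sum_delta.
  apply: le_trans (stat_le (s := t) hf (G := fun _ => r11 t (f0 t) + r12 t (d t)) _) _.
    by move=> a1 ha1; rewrite /= !hr // lerD2r hf0m.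
  by rewrite (stat_const _ _ hf) hr.
have hP : forall g, stationary Av2 g -> disc_payoff mu r2 al (detS f0) g = Val al q c g.
  move=> g hg; rewrite /disc_payoff /Val.
  have -> : genQ mu (detS f0) g = Qm q g.
    by apply/matrixP => i j; rewrite !mxE collapse1.
  have -> // : rew r2 (detS f0) g = cvec c g.
  by apply/matrixP => i j; rewrite !mxE collapse1.
move=> g hg s; rewrite !hP //.
exact: (bellman_opt hq1 hq2 hal (hB al hal hle) hg s).
Qed.
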